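(* Let $d\ge2$, $N\ge1$, $\boldsymbol{\alpha}=(\alpha_1,\dots,\alpha_d)$ with all $\alpha_i>0$, and $s$ an integer with $0\le s\le N$. Each of the Pólya level model, the Pólya down-up model and the Pólya up-down model with these parameters is a Markov chain on $\mathcal{X}_N^d$ that is reversible with respect to the Dirichlet-multinomial distribution $\mathcal{DM}(\cdot\mid N,\boldsymbol{\alpha})$.
   Context: $\mathcal{X}_N^d=\{\mathbf{x}\in\mathbb{N}_0^d:|\mathbf{x}|=N\}$, where $|\mathbf{x}|=\sum_i x_i$. Rising factorial: $a_{(k)}=a(a+1)\cdots(a+k-1)$, $a_{(0)}=1$. The Dirichlet-multinomial distribution is $\mathcal{DM}(\mathbf{x}\mid N,\boldsymbol{\alpha})=\frac{N!}{x_1!\cdots x_d!}\frac{\prod_{i=1}^d(\alpha_i)_{(x_i)}}{|\boldsymbol{\alpha}|_{(N)}}$ for $\mathbf{x}\in\mathcal{X}_N^d$, where $|\boldsymbol{\alpha}|=\sum_i\alpha_i$. Pólya urn models: an urn contains $d$ special balls, the $i$-th of color $i$ and weight $\alpha_i$, together with $N$ ordinary balls, each of unit weight and of one of the colors $1,\dots,d$. A Pólya draw consists of choosing a ball from the urn (special or ordinary) with probability proportional to its weight, and returning it together with one new ordinary ball (unit weight) of the same color. One step of the Pólya level model: mark $s$ of the $N$ ordinary balls uniformly at random (without replacement); perform $s$ successive Pólya draws (the marked balls stay in the urn during the draws); then remove the $s$ marked balls. One step of the Pólya down-up model: remove $s$ ordinary balls chosen uniformly at random among the $N$ ordinary balls,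 then perform $s$ successive Pólya draws. One step of the Pólya up-down model: perform $s$ successive Pólya draws, then remove $s$ ordinary balls chosen uniformly at random among the $N+s$ ordinary balls. In all three models the state $\mathbf{X}_t\in\mathcal{X}_N^d$ is the vector of color counts of the $N$ ordinary balls after $t$ steps. *)

(* Defs.v *)
From HB Require Import structures.
From mathcomp Require Import all_boot all_order all_algebra.
Set Implicit Arguments. Unset Strict Implicit. Unset Printing Implicit Defensive.
Import Order.TTheory GRing.Theory Num.Theory.
Local Open Scope ring_scope.

(* Colour-count vectors of ordinary balls: x : 'I_d -> nat. *)
Definition cnt (d : nat) := {ffun 'I_d -> nat}.

Definition csize (d : nat) (c : cnt d) : nat := (\sum_(i < d) c i)%N.

Definition incr (d : nat) (c : cnt d) (i : 'I_d) : cnt d :=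
  [ffun j => (c j + (j == i))%N].

Definition cadd (d : nat) (c r : cnt d) : cnt d := [ffun i => (c i + r i)%N].
Definition csub (d : nat) (c r : cnt d) : cnt d := [ffun i => (c i - r i)%N].

Section Defs.
Variables (R : realFieldType) (d : nat) (alpha : 'I_d -> R).

Definition asum : R := \sum_(i < d) alpha i.

Definition rising (a : R) (k : nat) : R := \prod_(j < k) (a + j%:R).

Definition DM (N : nat) (x : cnt d) : R :=
  (N`!)%:R / (\prod_(i < d) (x i)`!)%:R
  * (\prod_(i < d) rising (alpha i) (x i)) / rising asum N.

(* Probability that a single Polya draw from an urn whose ordinary balls
   have colour counts c yields colour i (special ball of colour i has
   weight alpha i, each ordinary ball weight 1). *)
Definition draw_prob (c : cnt d) (i : 'I_d) : R :=
  (alpha i + (c i)%:R) / (asum + (csize c)%:R).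

(* polya k c z = probability that after k successive Polya draws starting
   from ordinary counts c, the ordinary counts are z. *)
Fixpoint polya (k : nat) (c : cnt d) (z : cnt d) : R :=
  match k with
  | 0 => (z == c)%:R
  | k'.+1 => \sum_(i < d) draw_prob c i * polya k' (incr c i) z
  end.

(* Probability that a uniformly random subset of |r| ordinary balls, among
   the balls with colour counts c, has colour composition r. *)
Definition hyp (c r : cnt d) : R :=
  (\prod_(i < d) 'C(c i, r i))%:R / ('C(csize c, csize r))%:R.

Definition tocnt (M : nat) (y : {ffun 'I_d -> 'I_M}) : cnt d :=
  [ffun i => nat_of_ord (y i)].

(* Transition kernels; the sum runs over the composition r of the s
   marked / removed balls. *)
Definition level_kernel (s : nat) (x y : cnt d) : R :=
  \sum_(r : {ffun 'I_d -> 'I_s.+1} | (\sum_(i < d) nat_of_ord (r i) == s)%N)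
    hyp x (tocnt r) * polya s x (cadd y (tocnt r)).

Definition downup_kernel (s : nat) (x y : cnt d) : R :=
  \sum_(r : {ffun 'I_d -> 'I_s.+1} | (\sum_(i < d) nat_of_ord (r i) == s)%N)
    hyp x (tocnt r) * polya s (csub x (tocnt r)) y.

Definition updown_kernel (s : nat) (x y : cnt d) : R :=
  \sum_(r : {ffun 'I_d -> 'I_s.+1} | (\sum_(i < d) nat_of_ord (r i) == s)%N)
    polya s x (cadd y (tocnt r)) * hyp (cadd y (tocnt r)) (tocnt r).

Definition inX (N : nat) (x : cnt d) : bool := csize x == N.

Definition reversible_chain (N : nat) (K : cnt d -> cnt d -> R) : Prop :=
  [/\ (forall x y, inX N x -> 0 <= K x y),
      (forall x y, inX N x -> ~~ inX N y -> K x y = 0),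
      (forall x, inX N x ->
         \sum_(y : {ffun 'I_d -> 'I_N.+1} | inX N (tocnt y)) K x (tocnt y) = 1)
    & (forall x y, inX N x -> inX N y -> DM N x * K x y = DM N y * K y x)].

End Defs.

(* Main.v *)
Require Import Defs.
From HB Require Import structures.
From mathcomp Require Import all_boot all_order all_algebra.
From mathcomp Require Import zify ring lra.
Import Order.TTheory GRing.Theory Num.Theory.
Local Open Scope ring_scope.
Set Implicit Arguments. Unset Strict Implicit. Unset Printing Implicit Defensive.

Section Gen.
Variable R : realFieldType.

Lemma sum_pbij (I J : finType) (T : I -> R) (U : J -> R) (f : I -> J) (g : J -> I) :
  (forall i, T i != 0 -> g (f i) = i /\ U (f i) = T i) ->
  (forall j, U j != 0 -> f (g j) = j /\ T (g j) = U j) ->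
  \sum_i T i = \sum_j U j.
Proof.
move=> H1 H2.
rewrite (bigID (fun i => T i != 0)) /= (@big1 _ _ _ _ _ (fun i => ~~ (T i != 0))); last by move=> i /negPn/eqP.
rewrite [RHS](bigID (fun j => U j != 0)) /= (@big1 _ _ _ _ _ (fun j => ~~ (U j != 0))); last by move=> i /negPn/eqP.
rewrite !addr0 (reindex_onto g f) => [|i /H1 []//].
apply: eq_big => j.
  apply/idP/idP.
    case/andP=> Tn /eqP fg; have [_ E] := H1 _ Tn; by rewrite -fg E.
  move=> Un; have [fg E] := H2 _ Un; by rewrite E Un fg eqxx.
case/andP=> Tn /eqP fg; have [_ E] := H1 _ Tn; by rewrite -[in RHS]fg E.
Qed.

Lemma rising_add (a : R) m n : rising a (m + n) = rising a m * rising (a + m%:R) n.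
Proof.
rewrite /rising big_split_ord /=; congr (_ * _); apply: eq_bigr => i _ /=.
by rewrite natrD addrA.
Qed.

Lemma rising_S (a : R) n : rising a n.+1 = a * rising (a + 1) n.
Proof.
rewrite /rising big_ord_recl /= addr0; congr (_ * _); apply: eq_bigr => i _.
rewrite /bump /= -addrA; congr (_ + _); rewrite -natr1 addrC; done.
Qed.

Lemma rising_gt0 (a : R) n : 0 < a -> 0 < rising a n.
Proof.
move=> a0; rewrite /rising; apply: prodr_gt0 => i _.
by apply: (lt_le_trans a0); rewrite lerDl ler0n.
Qed.

Lemma rising0 (a : R) : rising a 0 = 1.
Proof. by rewrite /rising big_ord0. Qed.

End Gen.

Section Cnt.
Variable d : nat.
Implicit Types c z r : cnt d.

Definition cle c z := [forall i, c i <= z i]%N.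

Lemma cleP c z : reflect (forall i, c i <= z i)%N (cle c z).
Proof. exact: forallP. Qed.

Lemma csize_incr c i : csize (incr c i) = (csize c).+1.
Proof.
rewrite /csize (bigD1 i) //= [in RHS](bigD1 i) //= ffunE eqxx addn1 addSn; congr (_.+1 + _)%N.
by apply: eq_bigr => j /negbTE ji; rewrite ffunE ji addn0.
Qed.

Lemma csize_cadd c r : csize (cadd c r) = (csize c + csize r)%N.
Proof. by rewrite /csize -big_split; apply: eq_bigr => i _; rewrite ffunE. Qed.

Lemma csize_split c z : cle c z -> csize z = (csize c + csize (csub z c))%N.
Proof.
move/cleP=> H; rewrite /csize -big_split; apply: eq_bigr => i _; rewrite ffunE.
by rewrite /= subnKC // H.
Qed.

Lemma csize_csub c r : cle r c -> csize (csub c r) = (csize c - csize r)%N.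
Proof. by move=> H; rewrite (csize_split H) addKn. Qed.

Lemma le_csize c i : (c i <= csize c)%N.
Proof. by rewrite /csize (bigD1 i) //= leq_addr. Qed.

Lemma csize0 c : csize c = 0%N -> forall i, c i = 0%N.
Proof. by move=> H i; apply/eqP; rewrite -leqn0 -H le_csize. Qed.

Lemma cle_eq c z : cle c z -> csize z = csize c -> z = c.
Proof.
move=> H E; have := csize_split H; rewrite E -{1}[csize c]addn0 => /eqP.
rewrite eqn_add2l eq_sym => /eqP /csize0 H0; apply/ffunP => i.
have := H0 i; rewrite ffunE => /eqP; rewrite subn_eq0 => zc.
by apply/eqP; rewrite eqn_leq zc (cleP _ _ H).
Qed.

End Cnt.

Section Polya.
Variables (R : realFieldType) (d : nat) (alpha : 'I_d -> R).
Hypothesis apos : forall i, 0 < alpha i.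
Hypothesis d_gt0 : (0 < d)%N.
Implicit Types c z r : cnt d.

Lemma asum_gt0 : 0 < asum alpha.
Proof.
rewrite /asum (bigD1 (Ordinal d_gt0)) //=; apply: ltr_wpDr; last exact: apos.
by apply: sumr_ge0 => i _; apply: ltW.
Qed.

Lemma asumc_gt0 (n : nat) : 0 < asum alpha + n%:R.
Proof. by apply: ltr_wpDr; [rewrite ler0n | exact: asum_gt0]. Qed.

Lemma dp_ge0 c i : 0 <= draw_prob alpha c i.
Proof.
rewrite /draw_prob divr_ge0 //; last exact: ltW (asumc_gt0 _).
by rewrite addr_ge0 // ?ler0n // ltW.
Qed.

Lemma polya_ge0 k c z : 0 <= polya alpha k c z.
Proof.
elim: k c => [|k IH] c /=; first by rewrite ler0n.
by apply: sumr_ge0 => i _; rewrite mulr_ge0 ?dp_ge0.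
Qed.

Lemma polya_supp k c z : polya alpha k c z != 0 -> cle c z && (csize z == csize c + k)%N.
Proof.
elim: k c => [|k IH] c /=.
  by rewrite pnatr_eq0 eqb0 negbK => /eqP ->; rewrite addn0 eqxx andbT; apply/cleP.
move=> H; have [i _ Hi] : exists2 i, true & draw_prob alpha c i * polya alpha k (incr c i) z != 0.
  apply/exists_inP; apply: contraNT H; rewrite negb_exists_in => /forall_inP H.
  by apply/eqP; apply: big1 => i _; apply/eqP/negPn/H.
move: Hi; rewrite mulf_eq0 negb_or => /andP[_ /IH /andP[/cleP H1 /eqP H2]].
rewrite H2 csize_incr addSnnS eqxx andbT; apply/cleP => j.
by apply: leq_trans (H1 j); rewrite ffunE leq_addr.
Qed.

Lemma dp_sum c : \sum_i draw_prob alpha c i = 1.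
Proof.
rewrite /draw_prob -mulr_suml big_split /= -natr_sum -/(asum alpha) -/(csize c).
by rewrite divff // gt_eqF // asumc_gt0.
Qed.


Definition PC k c z := (k`!)%:R *
  (\prod_i (rising (alpha i + (c i)%:R) (z i - c i) / ((z i - c i)`!)%:R))
  / rising (asum alpha + (csize c)%:R) k.

Lemma rising_ne0 (a : R) n : 0 < a -> rising a n != 0.
Proof. by move=> a0; rewrite gt_eqF // rising_gt0. Qed.

Lemma fact_ne0 n : (n`!)%:R != 0 :> R.
Proof. by rewrite pnatr_eq0 -lt0n fact_gt0. Qed.

Lemma polya_closed k c z : cle c z -> csize z = (csize c + k)%N -> polya alpha k c z = PC k c z.
Proof.
elim: k c => [|k IH] c.
  move=> H; rewrite addn0 => E; rewrite (cle_eq H E) /= eqxx /PC rising0 divr1 mul1r.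
  by rewrite big1 // => i _; rewrite subnn rising0 divr1.
move=> H E /=.
have Hi : forall i, draw_prob alpha c i * polya alpha k (incr c i) z =
   ((z i - c i)%N)%:R * (PC k.+1 c z / (k.+1)%:R).
  move=> i; have ci := cleP _ _ H i.
  case: (ltnP (c i) (z i)) => ciz; last first.
    have -> : (z i - c i = 0)%N by lia.
    rewrite mul0r; apply/eqP; rewrite mulf_eq0; apply/orP; right; apply/negPn/negP.
    move/polya_supp/andP=> [/cleP /(_ i)]; rewrite ffunE eqxx; lia.
  have H' : cle (incr c i) z.
    apply/cleP=> j; rewrite ffunE; case: eqP => [->|_]; [lia | by rewrite addn0 (cleP _ _ H)].
  rewrite IH //; last by rewrite csize_incr E addSnnS.
  rewrite /PC /draw_prob csize_incr.
  rewrite (bigD1 i) //= [X in _ = _ * (_ * X / _ / _)](bigD1 i) //=.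
  have -> : \prod_(j | j != i) (rising (alpha j + ((incr c i) j)%:R) (z j - (incr c i) j) /
      ((z j - (incr c i) j)`!)%:R) =
    \prod_(j | j != i) (rising (alpha j + (c j)%:R) (z j - c j) / ((z j - c j)`!)%:R).
    by apply: eq_bigr => j /negbTE ji; rewrite ffunE ji addn0.
  rewrite ffunE eqxx.
  have -> : (z i - c i = (z i - (c i + 1)).+1)%N by lia.
  set m := (z i - (c i + 1))%N.
  rewrite rising_S [rising (asum alpha + _) k.+1]rising_S !factS natrM -natr1.
  rewrite natrD !addrA.
  set P := \prod_(j | j != i) _.
  have B0 := asumc_gt0 (csize c).
  have r2 : rising (asum alpha + (csize c)%:R + 1) k != 0.
    by apply: rising_ne0; apply: ltr_wpDr => //; rewrite ler01.
  have m0 := fact_ne0 m; have k0 := fact_ne0 k.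
  have m1 : (m%:R + 1) != 0 :> R by rewrite natr1 pnatr_eq0.
  have k1 : (k%:R + 1) != 0 :> R by rewrite natr1 pnatr_eq0.
  rewrite natrM. field. by rewrite (addrC 1 k%:R) (addrC 1 m%:R) k1 r2 gt_eqF // m0 m1.
rewrite (eq_bigr _ (fun i _ => Hi i)) -mulr_suml -natr_sum.
have -> : (\sum_i (z i - c i))%N = k.+1.
  have := csize_split H; rewrite E => /eqP; rewrite eqn_add2l => /eqP ->.
  by rewrite /csize; apply: eq_bigr => i _; rewrite ffunE.
by rewrite mulrC -mulrA mulVf ?mulr1 // pnatr_eq0.
Qed.

End Polya.

Section Box.
Variables (R : realFieldType) (d : nat).
Implicit Types c z r : cnt d.

Definition BS M (F : cnt d -> R) := \sum_(y : {ffun 'I_d -> 'I_M.+1}) F (tocnt y).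
Definition ofcnt M c : {ffun 'I_d -> 'I_M.+1} := [ffun i => inord (c i)].

Lemma tocnt_ofcnt M c : (forall i, c i <= M)%N -> tocnt (ofcnt M c) = c.
Proof. by move=> H; apply/ffunP => i; rewrite !ffunE inordK // ltnS. Qed.

Lemma ofcnt_tocnt M (y : {ffun 'I_d -> 'I_M.+1}) : ofcnt M (tocnt y) = y.
Proof. by apply/ffunP => i; rewrite !ffunE; apply: val_inj; rewrite /= inordK. Qed.

Lemma tocnt_le M (y : {ffun 'I_d -> 'I_M.+1}) i : (tocnt y i <= M)%N.
Proof. by rewrite ffunE -ltnS. Qed.

Lemma BS_ext M M' F : (forall c, F c != 0 -> forall i, (c i <= M)%N /\ (c i <= M')%N) ->
  BS M F = BS M' F.
Proof.
move=> H; apply: (@sum_pbij _ _ _ _ _ (fun y => ofcnt M' (tocnt y)) (fun y => ofcnt M (tocnt y))).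
  move=> y Fy; have {}H := H _ Fy.
  rewrite tocnt_ofcnt ?ofcnt_tocnt // => i; by case: (H i).
move=> y Fy; have {}H := H _ Fy.
rewrite tocnt_ofcnt ?ofcnt_tocnt // => i; by case: (H i).
Qed.

Lemma BS_shift M M' F r :
  (forall c, F c != 0 -> cle r c /\ forall i, (c i - r i <= M /\ c i <= M')%N) ->
  BS M (fun y => F (cadd y r)) = BS M' F.
Proof.
move=> H; rewrite /BS /=.
apply: (@sum_pbij _ _ _ (fun y : {ffun 'I_d -> 'I_M.+1} => F (cadd (tocnt y) r))
   (fun w : {ffun 'I_d -> 'I_M'.+1} => F (tocnt w)) (fun y => ofcnt M' (cadd (tocnt y) r))
   (fun w => ofcnt M (csub (tocnt w) r))).
  move=> y Fy; have [_ H2] := H _ Fy.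
  rewrite tocnt_ofcnt => [|i]; last by case: (H2 i).
  have -> : csub (cadd (tocnt y) r) r = tocnt y.
    by apply/ffunP => i; rewrite !ffunE addnK.
  by rewrite ofcnt_tocnt.
move=> w Fz; have [/cleP H1 H2] := H _ Fz.
rewrite tocnt_ofcnt => [|i]; last by rewrite ffunE; case: (H2 i).
have -> : cadd (csub (tocnt w) r) r = tocnt w.
  by apply/ffunP => i; rewrite !ffunE subnK //; have := H1 i; rewrite ffunE.
by rewrite ofcnt_tocnt.
Qed.

End Box.

Section Polya2.
Variables (R : realFieldType) (d : nat) (alpha : 'I_d -> R).
Hypothesis apos : forall i, 0 < alpha i.
Hypothesis d_gt0 : (0 < d)%N.
Implicit Types c z r : cnt d.

Lemma polya_mass k c M : (csize c + k <= M)%N -> BS M (polya alpha k c) = 1.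
Proof.
elim: k c => [|k IH] c.
  rewrite addn0 => cM; rewrite /BS (bigD1 (ofcnt M c)) //= tocnt_ofcnt; last first.
    by move=> i; apply: leq_trans cM; apply: le_csize.
  rewrite eqxx big1 ?addr0 // => y yn; apply/eqP; rewrite pnatr_eq0 eqb0.
  by apply: contra yn => /eqP <-; rewrite ofcnt_tocnt.
move=> H; rewrite /BS /= exchange_big /= -(dp_sum apos d_gt0 c).
apply: eq_bigr => i _; rewrite -mulr_sumr.
by rewrite [X in _ * X = _]IH ?mulr1 // csize_incr addSnnS.
Qed.

End Polya2.

Section Vander.
Variables (R : realFieldType) (d : nat).
Implicit Types c z r x : cnt d.

Lemma binpoly_widen n M : (n <= M)%N ->
  ('X + 1) ^+ n = \sum_(k < M.+1) 'X^k *+ 'C(n, k) :> {poly R}.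
Proof.
move=> nM; rewrite exprD1n (@big_ord_widen _ _ _ n.+1 M.+1 (fun k => 'X^k *+ 'C(n, k))) //.
rewrite big_mkcond /=; apply: eq_bigr => k _; case: ifP => // /negbT.
by rewrite -leqNgt => /bin_small ->; rewrite mulr0n.
Qed.

Lemma coef_binpoly M s : (s <= M)%N ->
  (\sum_(k < M.+1) 'X^k *+ 'C(M, k) : {poly R})`_s = ('C(M, s))%:R.
Proof.
move=> sM; rewrite coef_sum (bigD1 (Ordinal (leq_ltn_trans sM (ltnSn M)))) //=.
rewrite coefMn coefXn eqxx big1 ?addr0 // => k /negbTE kn.
rewrite coefMn coefXn; case: eqP => [e|]; last by rewrite mul0rn.
by move: kn; rewrite (_ : k = Ordinal (leq_ltn_trans sM (ltnSn M))) ?eqxx //; apply: val_inj.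
Qed.

Lemma csize_tocnt M (y : {ffun 'I_d -> 'I_M}) : csize (tocnt y) = (\sum_i (y i : nat))%N.
Proof. by rewrite /csize; apply: eq_bigr => i _; rewrite ffunE. Qed.

Definition Fv x s (c : cnt d) : R :=
  if csize c == s then ((\prod_i 'C(x i, c i))%N)%:R else 0.

Lemma vander_nat x s : (s <= csize x)%N ->
  \sum_(r : {ffun 'I_d -> 'I_s.+1} | (\sum_(i < d) nat_of_ord (r i) == s)%N)
     ((\prod_i 'C(x i, tocnt r i))%N)%:R = ('C(csize x, s))%:R :> R.
Proof.
move=> sx; set M := csize x.
have E1 : (\prod_i ('X + 1) ^+ (x i) : {poly R}) = ('X + 1) ^+ M by rewrite prodrXr.
have E2 : (\prod_i ('X + 1) ^+ (x i) : {poly R}) =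
    \sum_(f : {ffun 'I_d -> 'I_M.+1}) 'X^(\sum_i (f i : nat)) *+ (\prod_i 'C(x i, f i))%N.
  rewrite (eq_bigr (fun i => \sum_(k < M.+1) 'X^k *+ 'C(x i, k))); last first.
    by move=> i _; apply: binpoly_widen; apply: le_csize.
  rewrite bigA_distr_bigA /=; apply: eq_bigr => f _.
  by rewrite prodrMn prodrXr.
have := congr1 (fun p : {poly R} => p`_s) (etrans (esym E1) E2).
rewrite /= (binpoly_widen (leqnn M)) coef_binpoly // coef_sum => ->.
have -> : \sum_(f : {ffun 'I_d -> 'I_M.+1}) ('X^(\sum_i (f i : nat)) *+ (\prod_i 'C(x i, f i))%N)`_s
     = BS M (Fv x s).
  apply: eq_bigr => f _; rewrite coefMn coefXn /Fv csize_tocnt.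
  rewrite eq_sym; case: eqP => _; last by rewrite mul0rn.
  rewrite -[RHS]mulr1n natr_prod -[in RHS]natr_prod; congr (_ *+ _).
  by apply: eq_bigr => i _; rewrite ffunE.
rewrite -(@BS_ext _ _ s); last first.
  move=> c; rewrite /Fv; case: (csize c =P s) => [e _ i|_]; last by rewrite eqxx.
  by rewrite -e le_csize /= (leq_trans (le_csize c i)) // e.
rewrite /BS big_mkcond /=; apply: eq_bigr => r _; rewrite /Fv csize_tocnt.
by case: ifP.
Qed.

Lemma vander x s : (s <= csize x)%N ->
  \sum_(r : {ffun 'I_d -> 'I_s.+1} | (\sum_(i < d) nat_of_ord (r i) == s)%N)
     hyp R x (tocnt r) = 1 :> R.
Proof.
move=> sx.
rewrite (eq_bigr (fun r : {ffun 'I_d -> 'I_s.+1} => ((\prod_i 'C(x i, tocnt r i))%N)%:R / ('C(csize x, s))%:R)); last first.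
  by move=> r /eqP rs; rewrite /hyp csize_tocnt rs.
rewrite -mulr_suml vander_nat // divff // pnatr_eq0 -lt0n bin_gt0 //.
Qed.

End Vander.

Section Coord.
Variable R : realFieldType.
Variable a : R.
Hypothesis a0 : 0 < a.

Let fn n := fact_ne0 R n.

Lemma natr_bin_fact x r : (r <= x)%N ->
  ('C(x, r))%:R = (x`!)%:R / ((r`!)%:R * ((x - r)`!)%:R) :> R.
Proof.
move=> rx; rewrite -(bin_fact rx) !natrM mulfK //.
by rewrite mulf_neq0 ?fn.
Qed.

Definition phiL (x y r : nat) : R := rising a x / (x`!)%:R * ('C(x, r))%:R *
  (rising (a + x%:R) (y + r - x) / ((y + r - x)`!)%:R).

Lemma phiL_norm x y r : (r <= x)%N -> (x <= y + r)%N ->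
  phiL x y r = rising a (y + r) / ((r`!)%:R * ((x - r)`!)%:R * ((y + r - x)`!)%:R).
Proof.
move=> rx xy; rewrite /phiL natr_bin_fact //.
have -> : (y + r = x + (y + r - x))%N by rewrite subnKC.
rewrite rising_add addKn; field.
by rewrite !fn.
Qed.

Lemma phiL_sym x y r : (r <= x)%N -> (x <= y + r)%N ->
  phiL x y r = phiL y x (y + r - x).
Proof.
move=> rx xy; rewrite phiL_norm // phiL_norm; [|lia|lia].
have -> : (x + (y + r - x) = y + r)%N by lia.
have -> : (y - (y + r - x) = x - r)%N by lia.
have -> : (y + r - y = r)%N by lia.
field. by rewrite !fn.
Qed.

Definition phiD (x y r : nat) : R := rising a x / (x`!)%:R * ('C(x, r))%:R *
  (rising (a + (x - r)%:R) (y - (x - r)) / ((y - (x - r))`!)%:R).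

Lemma phiD_norm x y r : (r <= x)%N -> (x - r <= y)%N ->
  phiD x y r = rising a (x - r) * rising (a + (x - r)%:R) r *
     rising (a + (x - r)%:R) (y - (x - r)) /
     ((r`!)%:R * ((x - r)`!)%:R * ((y - (x - r))`!)%:R).
Proof.
move=> rx xy; rewrite /phiD natr_bin_fact //.
have {1}-> : x = (x - r + r)%N by rewrite subnK.
rewrite rising_add; field.
by rewrite !fn.
Qed.

Lemma phiD_sym x y r : (r <= x)%N -> (x <= y + r)%N ->
  phiD x y r = phiD y x (y + r - x).
Proof.
move=> rx xy; rewrite phiD_norm; [|lia|lia]; rewrite phiD_norm; [|lia|lia].
have -> : (y - (y + r - x) = x - r)%N by lia.
have -> : (x - (x - r) = r)%N by lia.
have -> : (y + r - x = y - (x - r))%N by lia.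
field. by rewrite !fn.
Qed.

Definition phiU (x y r : nat) : R := rising a x / (x`!)%:R *
  (rising (a + x%:R) (y + r - x) / ((y + r - x)`!)%:R) * ('C(y + r, r))%:R.

Lemma phiU_norm x y r : (x <= y + r)%N ->
  phiU x y r = rising a (y + r) * ((y + r)`!)%:R /
     ((x`!)%:R * ((y + r - x)`!)%:R * (r`!)%:R * (y`!)%:R).
Proof.
move=> xy; rewrite /phiU natr_bin_fact ?leq_addl // addnK.
have -> : rising a (y + r) = rising a x * rising (a + x%:R) (y + r - x).
  by rewrite -rising_add subnKC.
field.
by rewrite !fn.
Qed.

Lemma phiU_sym x y r : (x <= y + r)%N ->
  phiU x y r = phiU y x (y + r - x).
Proof.
move=> xy; rewrite phiU_norm // phiU_norm; last lia.
have -> : (x + (y + r - x) = y + r)%N by lia.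
have -> : (y + r - y = r)%N by lia.
field. by rewrite !fn.
Qed.

End Coord.

Section Rev.
Variables (R : realFieldType) (d s N : nat).
Variable t : cnt d -> cnt d -> cnt d -> R.
Variable D : cnt d -> R.
Hypothesis Ht : forall x y r, csize x = N -> csize y = N -> csize r = s -> D x * t x y r != 0 ->
  cle x (cadd y r) /\ D x * t x y r = D y * t y x (csub (cadd y r) x).

Let Tf x y (r : {ffun 'I_d -> 'I_s.+1}) :=
  if (\sum_(i < d) nat_of_ord (r i) == s)%N then D x * t x y (tocnt r) else 0.
Let ff x y (r : {ffun 'I_d -> 'I_s.+1}) := ofcnt s (csub (cadd y (tocnt r)) x).

Lemma rev_one x y r : csize x = N -> csize y = N -> Tf x y r != 0 ->
  ff y x (ff x y r) = r /\ Tf y x (ff x y r) = Tf x y r.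
Proof.
move=> Ex Ey; have Exy : csize x = csize y by rewrite Ex Ey.
rewrite /Tf; case: ifP => [/eqP rs|_]; last by rewrite eqxx.
rewrite -csize_tocnt in rs => Hn; have [H1 H2] := Ht Ex Ey rs Hn.
set r' := csub (cadd y (tocnt r)) x.
have r's : csize r' = s by rewrite csize_csub // csize_cadd Exy rs addKn.
have Hr' : tocnt (ff x y r) = r'.
  by rewrite /ff tocnt_ofcnt // => i; apply: leq_trans (le_csize _ i) _; rewrite r's.
have -> : ff y x (ff x y r) = r.
  rewrite /ff Hr'; have -> : csub (cadd x r') y = tocnt r; last exact: ofcnt_tocnt.
  apply/ffunP => i; have := cleP _ _ H1 i; rewrite !ffunE; lia.
split=> //; rewrite -csize_tocnt Hr' r's eqxx.
by rewrite H2.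
Qed.

Lemma rev_gen x y : csize x = N -> csize y = N ->
  D x * \sum_(r : {ffun 'I_d -> 'I_s.+1} | (\sum_(i < d) nat_of_ord (r i) == s)%N) t x y (tocnt r) =
  D y * \sum_(r : {ffun 'I_d -> 'I_s.+1} | (\sum_(i < d) nat_of_ord (r i) == s)%N) t y x (tocnt r).
Proof.
move=> Ex Ey; rewrite !mulr_sumr !(big_mkcond (fun r : {ffun 'I_d -> 'I_s.+1} => _ == _)) /=.
apply: (@sum_pbij _ _ _ (Tf x y) (Tf y x) (ff x y) (ff y x)).
  by move=> r; apply: rev_one.
by move=> r; apply: rev_one.
Qed.

End Rev.

Section Kern.
Variables (R : realFieldType) (d : nat) (alpha : 'I_d -> R).
Hypothesis apos : forall i, 0 < alpha i.
Hypothesis d_gt0 : (0 < d)%N.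
Variables (N s : nat).
Hypothesis sN : (s <= N)%N.
Implicit Types x y c z r : cnt d.

Lemma hyp_supp x r : hyp R x r != 0 -> cle r x.
Proof.
apply: contraNT => /cleP H; rewrite /hyp.
have [i Hi] : exists i, ~~ (r i <= x i)%N.
  by apply/existsP; apply: contraT; rewrite negb_exists => /forallP H'; case: H => i; apply/negPn.
by rewrite (bigD1 i) //= bin_small ?mul0n ?mul0r // ltnNge.
Qed.

Lemma hyp_ge0 x r : 0 <= hyp R x r.
Proof. by rewrite /hyp divr_ge0 ?ler0n. Qed.

Let fn n := fact_ne0 R n.

Lemma algL (a b c e f g h k l m : R) : b != 0 -> e != 0 -> g != 0 -> l != 0 -> m != 0 ->
  a / b * c / e * (f / g * (h * (k / l) / m)) = a / e / g * (h / m) * (c / b * f * (k / l)).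
Proof. move=> *; field. by apply/and5P. Qed.

Lemma prodfact_ne0 x : \prod_i ((x i)`!)%:R != 0 :> R.
Proof. by apply/prodf_neq0 => i _; apply: fn. Qed.

Definition KL := (N`!)%:R / rising (asum alpha) N / ('C(N, s))%:R *
   ((s`!)%:R / rising (asum alpha + N%:R) s).

Lemma termL x y r : csize x = N -> csize r = s -> cle r x -> cle x (cadd y r) ->
  csize (cadd y r) = (N + s)%N ->
  DM alpha N x * (hyp R x r * polya alpha s x (cadd y r)) =
  KL * \prod_i phiL (alpha i) (x i) (y i) (r i).
Proof.
move=> Hx Hr rx xyr Hz.
rewrite polya_closed //; last by rewrite Hx.
have E : \prod_i (rising (alpha i + (x i)%:R) (cadd y r i - x i) / ((cadd y r i - x i)`!)%:R) =
   \prod_i (rising (alpha i + (x i)%:R) (y i + r i - x i) / ((y i + r i - x i)`!)%:R).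
  by apply: eq_bigr => i _; rewrite ffunE.
rewrite /PC E /DM /hyp /KL /phiL Hx Hr !natr_prod !big_split /= !prodfV.
have h1 := prodfact_ne0 x.
have h2 : rising (asum alpha) N != 0 by apply: rising_ne0; apply: asum_gt0.
have h3 : ('C(N, s))%:R != 0 :> R by rewrite pnatr_eq0 -lt0n bin_gt0.
have h4 : rising (asum alpha + N%:R) s != 0 by apply: rising_ne0; apply: asumc_gt0.
move: h1; set P1 := \prod_(i < d) _`!%:R; move=> h1.
set P2 := \prod_(i < d) rising (alpha i) (x i).
set P3 := \prod_(i < d) 'C(x i, r i)%:R.
set P4 := \prod_(i < d) rising _ _.
set P5 := \prod_(i < d) _`!%:R.
have h5 : P5 != 0 by apply/prodf_neq0 => i _; apply: fn.
exact: algL.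
Qed.

Lemma algU (a b c e f g h k l m : R) : b != 0 -> e != 0 -> g != 0 -> l != 0 -> m != 0 ->
  a / b * c / e * (h * (k / l) / m * (f / g)) = a / e * (h / m) / g * (c / b * (k / l) * f).
Proof. move=> *; field. by apply/and5P. Qed.

Definition KD := (N`!)%:R / rising (asum alpha) N / ('C(N, s))%:R *
   ((s`!)%:R / rising (asum alpha + (N - s)%:R) s).

Lemma termD x y r : csize x = N -> csize r = s -> cle r x -> cle (csub x r) y ->
  csize y = (csize (csub x r) + s)%N ->
  DM alpha N x * (hyp R x r * polya alpha s (csub x r) y) =
  KD * \prod_i phiD (alpha i) (x i) (y i) (r i).
Proof.
move=> Hx Hr rx xry Hy.
rewrite polya_closed //.
have E : \prod_i (rising (alpha i + (csub x r i)%:R) (y i - csub x r i) / ((y i - csub x r i)`!)%:R) =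
   \prod_i (rising (alpha i + (x i - r i)%:R) (y i - (x i - r i)) / ((y i - (x i - r i))`!)%:R).
  by apply: eq_bigr => i _; rewrite ffunE.
rewrite /PC E /DM /hyp /KD /phiD csize_csub // Hx Hr !natr_prod !big_split /= !prodfV.
have h1 := prodfact_ne0 x.
have h2 : rising (asum alpha) N != 0 by apply: rising_ne0; apply: asum_gt0.
have h3 : ('C(N, s))%:R != 0 :> R by rewrite pnatr_eq0 -lt0n bin_gt0.
have h4 : rising (asum alpha + (N - s)%:R) s != 0 by apply: rising_ne0; apply: asumc_gt0.
have h5 : \prod_i ((y i - (x i - r i))`!)%:R != 0 :> R by apply/prodf_neq0 => i _; apply: fn.
exact: algL.
Qed.

Definition KU := (N`!)%:R / rising (asum alpha) N *
   ((s`!)%:R / rising (asum alpha + N%:R) s) / ('C(N + s, s))%:R.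

Lemma termU x y r : csize x = N -> csize r = s -> cle x (cadd y r) ->
  csize (cadd y r) = (N + s)%N ->
  DM alpha N x * (polya alpha s x (cadd y r) * hyp R (cadd y r) r) =
  KU * \prod_i phiU (alpha i) (x i) (y i) (r i).
Proof.
move=> Hx Hr xyr Hz.
rewrite polya_closed //; last by rewrite Hx.
have E : \prod_i (rising (alpha i + (x i)%:R) (cadd y r i - x i) / ((cadd y r i - x i)`!)%:R) =
   \prod_i (rising (alpha i + (x i)%:R) (y i + r i - x i) / ((y i + r i - x i)`!)%:R).
  by apply: eq_bigr => i _; rewrite ffunE.
have E2 : (\prod_i 'C(cadd y r i, r i))%N = (\prod_i 'C(y i + r i, r i))%N.
  by apply: eq_bigr => i _; rewrite ffunE.
rewrite /PC E /DM /hyp E2 /KU /phiU Hz Hx Hr !natr_prod !big_split /= !prodfV.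
have h1 := prodfact_ne0 x.
have h2 : rising (asum alpha) N != 0 by apply: rising_ne0; apply: asum_gt0.
have h3 : ('C(N + s, s))%:R != 0 :> R by rewrite pnatr_eq0 -lt0n bin_gt0 leq_addl.
have h4 : rising (asum alpha + N%:R) s != 0 by apply: rising_ne0; apply: asumc_gt0.
have h5 : \prod_i ((y i + r i - x i)`!)%:R != 0 :> R by apply/prodf_neq0 => i _; apply: fn.
exact: algU.
Qed.

End Kern.

Section Final.
Variables (R : realFieldType) (d : nat) (alpha : 'I_d -> R).
Hypothesis apos : forall i, 0 < alpha i.
Hypothesis d_gt0 : (0 < d)%N.
Variables (N s : nat).
Hypothesis sN : (s <= N)%N.
Implicit Types x y c z r : cnt d.

Lemma sum_inX (K : cnt d -> cnt d -> R) x : (forall y, ~~ inX N y -> K x y = 0) ->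
  \sum_(y : {ffun 'I_d -> 'I_N.+1} | inX N (tocnt y)) K x (tocnt y) = BS N (K x).
Proof.
move=> H; rewrite /BS big_mkcond; apply: eq_bigr => y _.
by case: ifP => // /negbT /H ->.
Qed.

Lemma cadd_csub x y r : cle x (cadd y r) -> cadd x (csub (cadd y r) x) = cadd y r.
Proof.
move/cleP=> H; apply/ffunP => i; have := H i; rewrite !ffunE => Hi; lia.
Qed.

Lemma r'_props x y r : csize x = N -> csize y = N -> csize r = s -> cle x (cadd y r) ->
  csize (csub (cadd y r) x) = s.
Proof. by move=> Hx Hy Hr H; rewrite csize_csub // csize_cadd Hx Hy Hr addKn. Qed.

Lemma level_rev : reversible_chain alpha N (level_kernel alpha s).
Proof.
have Zk : forall x y, inX N x -> ~~ inX N y -> level_kernel alpha s x y = 0.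
  move=> x y /eqP Hx Hy; apply: big1 => r /eqP rs; apply/eqP; rewrite mulf_eq0.
  apply/orP; right; apply: contraNT Hy => /polya_supp /andP [_].
  by rewrite csize_cadd Hx csize_tocnt rs eqn_add2r.
split.
- move=> x y _; apply: sumr_ge0 => r _.
  by rewrite mulr_ge0 ?hyp_ge0 // polya_ge0 // => i; apply: ltW.
- exact: Zk.
- move=> x Hx; rewrite (@sum_inX (level_kernel alpha s) x); last by move=> y Hy; apply: (Zk x y Hx Hy).
  move/eqP: Hx => Hx.
  rewrite /BS /level_kernel exchange_big /= -[RHS](@vander R d x s); last by rewrite Hx.
  apply: eq_bigr => r /eqP rs; rewrite -mulr_sumr.
  have [->|hn] := eqVneq (hyp R x (tocnt r)) 0; first by rewrite mul0r.
  have rx := hyp_supp hn.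
  rewrite -[RHS]mulr1; congr (_ * _).
  rewrite -[LHS]/(BS N (fun c => polya alpha s x (cadd c (tocnt r)))) (@BS_shift _ _ N (N + s) (polya alpha s x)) ?polya_mass // ?Hx //.
  move=> c /polya_supp /andP [xc /eqP cs]; split.
    by apply/cleP => i; apply: leq_trans (cleP _ _ rx i) (cleP _ _ xc i).
  move=> i; split; last by rewrite -Hx -cs le_csize.
  have rc : cle (tocnt r) c by apply/cleP => i0; apply: leq_trans (cleP _ _ rx i0) (cleP _ _ xc i0).
  have := le_csize (csub c (tocnt r)) i; rewrite csize_csub // cs Hx csize_tocnt rs addnK.
  by rewrite ffunE.
- move=> x1 y1 /eqP Hx /eqP Hy.
  apply: (@rev_gen R d s N (fun x y r => hyp R x r * polya alpha s x (cadd y r)) (DM alpha N)) => //.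
  move=> x y r Ex Ey Er; rewrite mulf_eq0 negb_or => /andP [_]; rewrite mulf_eq0 negb_or => /andP [h p].
  have rx := hyp_supp h; have /andP [xyr /eqP Ez] := polya_supp p.
  split=> //.
  have Er' := r'_props Ex Ey Er xyr.
  have E1 := cadd_csub xyr.
  rewrite termL // ?Ex //; last by rewrite csize_cadd Ey Er.
  rewrite termL // ?E1 //; last by rewrite csize_cadd Ey Er.
  + congr (_ * _); apply: eq_bigr => i _; rewrite ffunE ffunE phiL_sym //.
      by have := cleP _ _ rx i.
    by have := cleP _ _ xyr i; rewrite ffunE.
  + apply/cleP => i; have := cleP _ _ rx i; rewrite !ffunE; lia.
  + apply/cleP => i; rewrite ffunE; lia.
Qed.

Lemma downup_rev : reversible_chain alpha N (downup_kernel alpha s).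
Proof.
have Zk : forall x y, inX N x -> ~~ inX N y -> downup_kernel alpha s x y = 0.
  move=> x y /eqP Hx Hy; apply: big1 => r /eqP rs.
  have [->|hn] := eqVneq (hyp R x (tocnt r)) 0; first by rewrite mul0r.
  have rx := hyp_supp hn.
  apply/eqP; rewrite mulf_eq0; apply/orP; right; apply: contraNT Hy => /polya_supp /andP [_].
  by rewrite csize_csub // Hx csize_tocnt rs subnK.
split.
- move=> x y _; apply: sumr_ge0 => r _.
  by rewrite mulr_ge0 ?hyp_ge0 // polya_ge0 // => i; apply: ltW.
- exact: Zk.
- move=> x Hx; rewrite (@sum_inX (downup_kernel alpha s) x); last by move=> y Hy; apply: (Zk x y Hx Hy).
  move/eqP: Hx => Hx.
  rewrite /BS /downup_kernel exchange_big /= -[RHS](@vander R d x s); last by rewrite Hx.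
  apply: eq_bigr => r /eqP rs; rewrite -mulr_sumr.
  have [->|hn] := eqVneq (hyp R x (tocnt r)) 0; first by rewrite mul0r.
  have rx := hyp_supp hn.
  rewrite -[RHS]mulr1; congr (_ * _).
  rewrite -[LHS]/(BS N (polya alpha s (csub x (tocnt r)))) polya_mass //.
  by rewrite csize_csub // Hx csize_tocnt rs subnK.
- move=> x1 y1 /eqP Hx /eqP Hy.
  apply: (@rev_gen R d s N (fun x y r => hyp R x r * polya alpha s (csub x r) y) (DM alpha N)) => //.
  move=> x y r Ex Ey Er; rewrite mulf_eq0 negb_or => /andP [_]; rewrite mulf_eq0 negb_or => /andP [h p].
  have rx := hyp_supp h; have /andP [xry /eqP Ez] := polya_supp p.
  have xyr : cle x (cadd y r).
    by apply/cleP => i; have := cleP _ _ rx i; have := cleP _ _ xry i; rewrite !ffunE; lia.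
  split=> //.
  have Er' := r'_props Ex Ey Er xyr.
  have r'y : cle (csub (cadd y r) x) y.
    by apply/cleP => i; have := cleP _ _ rx i; rewrite !ffunE; lia.
  rewrite termD //.
  rewrite termD //.
  + congr (_ * _); apply: eq_bigr => i _; rewrite ffunE ffunE phiD_sym //.
      by have := cleP _ _ rx i.
    by have := cleP _ _ xyr i; rewrite ffunE.
  + apply/cleP => i; have := cleP _ _ rx i; rewrite !ffunE; lia.
  + by rewrite csize_csub // Er' Ey subnK.
Qed.

Lemma updown_rev : reversible_chain alpha N (updown_kernel alpha s).
Proof.
have Zk : forall x y, inX N x -> ~~ inX N y -> updown_kernel alpha s x y = 0.
  move=> x y /eqP Hx Hy; apply: big1 => r /eqP rs; apply/eqP; rewrite mulf_eq0.
  apply/orP; left; apply: contraNT Hy => /polya_supp /andP [_].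
  by rewrite csize_cadd Hx csize_tocnt rs eqn_add2r.
split.
- move=> x y _; apply: sumr_ge0 => r _.
  by rewrite mulr_ge0 ?hyp_ge0 // polya_ge0 // => i; apply: ltW.
- exact: Zk.
- move=> x Hx; rewrite (@sum_inX (updown_kernel alpha s) x); last by move=> y Hy; apply: (Zk x y Hx Hy).
  move/eqP: Hx => Hx.
  rewrite /BS /updown_kernel exchange_big /=.
  transitivity (\sum_(r : {ffun 'I_d -> 'I_s.+1} | (\sum_(i < d) nat_of_ord (r i) == s)%N)
     BS (N + s) (fun z => polya alpha s x z * hyp R z (tocnt r))).
    apply: eq_bigr => r /eqP rs.
    rewrite -[LHS]/(BS N (fun c => (fun z => polya alpha s x z * hyp R z (tocnt r)) (cadd c (tocnt r)))).
    rewrite (@BS_shift _ _ N (N + s)) // => c; rewrite mulf_eq0 negb_or => /andP [p h].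
    have rc := hyp_supp h; have /andP [xc /eqP cs] := polya_supp p.
    split=> // i; split; last by rewrite -Hx -cs le_csize.
    have := le_csize (csub c (tocnt r)) i; rewrite csize_csub // cs Hx csize_tocnt rs addnK.
    by rewrite ffunE.
  rewrite /BS exchange_big /= -[RHS](@polya_mass _ _ alpha apos d_gt0 s x (N + s)); last by rewrite Hx.
  apply: eq_bigr => z _; rewrite -mulr_sumr.
  have [->|p] := eqVneq (polya alpha s x (tocnt z)) 0; first by rewrite mul0r.
  have /andP [_ /eqP cs] := polya_supp p.
  by rewrite vander ?mulr1 // cs leq_addl.
- move=> x1 y1 /eqP Hx /eqP Hy.
  apply: (@rev_gen R d s N (fun x y r => polya alpha s x (cadd y r) * hyp R (cadd y r) r) (DM alpha N)) => //.
  move=> x y r Ex Ey Er; rewrite mulf_eq0 negb_or => /andP [_]; rewrite mulf_eq0 negb_or => /andP [p h].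
  have /andP [xyr /eqP Ez] := polya_supp p.
  split=> //.
  have Er' := r'_props Ex Ey Er xyr.
  have E1 := cadd_csub xyr.
  rewrite termU // ?Ex //; last by rewrite csize_cadd Ey Er.
  rewrite termU // ?E1 //; last by rewrite csize_cadd Ey Er.
  + congr (_ * _); apply: eq_bigr => i _; rewrite ffunE ffunE phiU_sym //.
    by have := cleP _ _ xyr i; rewrite ffunE.
  + apply/cleP => i; rewrite ffunE; lia.
Qed.

End Final.

Theorem lemma4p4 (R : realFieldType) (d N s : nat) (alpha : 'I_d -> R) :
  (2 <= d)%N -> (1 <= N)%N -> (forall i, 0 < alpha i) -> (s <= N)%N ->
  [/\ reversible_chain alpha N (level_kernel alpha s),
      reversible_chain alpha N (downup_kernel alpha s)
    & reversible_chain alpha N (updown_kernel alpha s)].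
Proof.
move=> d2 _ apos sN; have d0 : (0 < d)%N by apply: leq_trans d2.
split; [exact: level_rev | exact: downup_rev | exact: updown_rev].
Qed.
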